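(* Let $N\ge2$, let $\Upsilon$ be a tree-like covering of $\mathcal U$ with base vertex $B$, and let $s\in BC_N\subset\mathrm{Aut}(F_N)$. Then the pointed covering $s(\Upsilon)$ (the one corresponding to the subgroup $s(\mathfrak g(\Upsilon))$) is tree-like as well, and $\Gamma(s(\Upsilon))=s(\Gamma(\Upsilon))$ as edge-labelled trees with a marked vertex.
   Context: $\mathcal U=\bigvee_{k=0}^{N-1}(S^1)_k$ is a wedge of $N$ oriented circles with wedge point $O$, and $F_N=\pi_1(\mathcal U,O)$ is free on generators $e_0,\dots,e_{N-1}$, $e_k$ corresponding to the $k$-th circle. A (connected, unramified) covering $r:\Upsilon\to\mathcal U$ is viewed as a graph whose edges are oriented and labelled by $k$ (or $e_k$) when mapped to the $k$-th circle; a base vertex $B$ is chosen, and $\mathfrak g(\Upsilon)=r_*(\pi_1(\Upsilon,B))\subset F_N$; pointed coverings up to equivalence correspond bijectively to subgroups of $F_N$, and $\mathrm{Aut}(F_N)$ acts on pointed coverings through its action $H\mapsto s(H)$ on subgroups. A circuit is a closed sequence of edges passing every vertex at most once. $\Upsilon$ is tree-like if (1) all circuits have length 1 or 2; (2) both edges of every circuit of length 2 have the same label; (3) for each $k\in\{0,\dots,N-1\}$ there is exactly one circuit of length 2 whose edges are labelled $k$. For tree-like $\Upsilon$, $\Gamma(\Upsilon)$ is the graph on the vertices of $\Upsilon$ in which $A,B$ are joined by an edge labelled $k$ iff $\Upsilon$ contains edges $A\to B$ and $B\to A$ both labelled $k$ (loops ignored); it is a tree with $N$ edges labelled bijectively by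 $0,\dots,N-1$, with the base vertex marked. $BC_N$ is the subgroup of $\mathrm{Aut}(F_N)$ generated by $\lambda(e_k)=e_{k+1}$ (indices mod $N$) and $u_1,\dots,u_{N-1}$ with $u_k(e_{k-1})=e_k$, $u_k(e_k)=e_k^{-1}e_{k-1}e_k$, $u_k(e_l)=e_l$ for $l\neq k-1,k$. $BC_N$ acts on edge-labelled trees with a marked vertex without changing the vertex set or the marked vertex: $u_k$ exchanges the labels $k-1,k$ if the edges with these labels are disjoint, and if the edge labelled $k-1$ is $AB$ and the edge labelled $k$ is $AC$ then $AB$ receives label $k$, $AC$ is erased and a new edge $BC$ labelled $k-1$ is drawn; $\lambda$ shifts labels $i\mapsto i+1\pmod N$. *)

(* Defs.v *)
From HB Require Import structures.
From mathcomp Require Import all_boot all_fingroup.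
From Stdlib Require Import Relations.
Set Implicit Arguments. Unset Strict Implicit. Unset Printing Implicit Defensive.

(* The free group F_N, as words modulo free reduction.                 *)
(* A letter (i, false) is e_i, a letter (i, true) is e_i^{-1}.         *)
Definition letter (N : nat) := ('I_N * bool)%type.
Definition fword (N : nat) := seq (letter N).
Definition inv_letter N (x : letter N) : letter N := (x.1, ~~ x.2).
Definition inv_word N (w : fword N) : fword N := rev (map (@inv_letter N) w).

Inductive red_step N : fword N -> fword N -> Prop :=
  | RedStep (u v : fword N) (x : letter N) :
      red_step (u ++ [:: x; inv_letter x] ++ v) (u ++ v).

Definition free_eq N : relation (fword N) := clos_refl_sym_trans _ (@red_step N).

Definition subst N (phi : 'I_N -> fword N) (w : fword N) : fword N :=
  flatten (map (fun x : letter N => if x.2 then inv_word (phi x.1) else phi x.1) w).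

(* BLam = lambda, BU k = u_k (requires 0 < k, i.e. 1 <= k <= N-1).     *)
Inductive bcgen (N : nat) := BLam | BLamInv | BU of 'I_N | BUInv of 'I_N.
Arguments BLam {N}. Arguments BLamInv {N}.

Definition gen_ok N (g : bcgen N) : bool :=
  match g with BU k | BUInv k => 0 < k | _ => true end.
(* a word g_1 ... g_m in the generators and their inverses, standing for
   the element g_1 o g_2 o ... o g_m of BC_N; every element of BC_N is
   represented by such a word *)
Definition bc_word_ok N (s : seq (bcgen N)) : bool := all (@gen_ok N) s.

Definition gl N (i : 'I_N) : fword N := [:: (i, false)].
Definition glinv N (i : 'I_N) : fword N := [:: (i, true)].

(* images of the generators (ord_pred k = k-1, ordS k = k+1 mod N) *)
Definition gen_img N (g : bcgen N) : 'I_N -> fword N :=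
  match g with
  | BLam => fun i => gl (ordS i)
  | BLamInv => fun i => gl (ord_pred i)
  | BU k => fun i =>
      if i == ord_pred k then gl k
      else if i == k then glinv k ++ gl (ord_pred k) ++ gl k
      else gl i
  | BUInv k => fun i =>
      if i == k then gl (ord_pred k)
      else if i == ord_pred k then gl (ord_pred k) ++ gl k ++ glinv (ord_pred k)
      else gl i
  end.

Fixpoint bc_apply N (s : seq (bcgen N)) (w : fword N) : fword N :=
  match s with
  | [::] => w
  | g :: s' => subst (gen_img g) (bc_apply s' w)
  end.

(* Coverings of the wedge U of N circles: a (finite) vertex set V and,  *)
(* for each label k, the permutation sigma k sending a vertex v to the *)
(* endpoint of the unique edge labelled k starting at v.               *)
Section Coverings.
Variables (N : nat) (V : finType) (sigma : 'I_N -> {perm V}).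

Definition step_letter (v : V) (x : letter N) : V :=
  if x.2 then ((sigma x.1)^-1)%g v else sigma x.1 v.

(* endpoint of the lift starting at v of the path spelled by w *)
Definition read (v : V) (w : fword N) : V := foldl step_letter v w.

Definition connected_cov (B : V) : Prop := forall v, exists w, read B w = v.

(* w represents an element of g(Upsilon) = r_*(pi_1(Upsilon, B)) *)
Definition in_g (B : V) (w : fword N) : Prop := read B w = B.

Definition circuit (m : nat) (vs : 'I_m -> V) (ks : 'I_m -> 'I_N) : Prop :=
  0 < m /\ injective vs /\ forall i, sigma (ks i) (vs i) = vs (ordS i).

Definition tree_like : Prop :=
  (forall m vs ks, @circuit m vs ks -> m <= 2) /\
  (forall vs ks, @circuit 2 vs ks -> ks ord0 = ks ord_max) /\
  (forall k : 'I_N, exists vs ks, @circuit 2 vs ks /\ (forall i, ks i = k) /\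
     forall vs' ks', @circuit 2 vs' ks' -> (forall i, ks' i = k) ->
       (vs' ord0 = vs ord0 /\ vs' ord_max = vs ord_max) \/
       (vs' ord0 = vs ord_max /\ vs' ord_max = vs ord0)).

Definition gamma_edge (k : 'I_N) (A B : V) : bool :=
  [&& A != B, sigma k A == B & sigma k B == A].

(* Gamma(Upsilon) as an edge-labelled graph: label k |-> set of endpoints
   of the edges labelled k (for tree-like Upsilon, exactly one edge per
   label, so this is the 2-element set of its endpoints) *)
Definition gamma : 'I_N -> {set V} :=
  fun k => [set A | [exists B, gamma_edge k A B]].
End Coverings.

(* Action of BC_N on edge-labelled trees E : 'I_N -> {set V}            *)
(* (E k = endpoints of the edge labelled k); marked vertex unchanged.  *)
Definition symdiff (V : finType) (X Y : {set V}) : {set V} := (X :|: Y) :\: (X :&: Y).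

Definition gen_tree_act N (V : finType) (g : bcgen N) (E : 'I_N -> {set V}) : 'I_N -> {set V} :=
  match g with
  | BLam => fun j => E (ord_pred j)
  | BLamInv => fun j => E (ordS j)
  | BU k => fun j =>
      let X := E (ord_pred k) in let Y := E k in
      if [disjoint X & Y] then
        (if j == ord_pred k then Y else if j == k then X else E j)
      else (* X = AB, Y = AC : AB gets label k, new edge BC labelled k-1 *)
        (if j == ord_pred k then symdiff X Y else if j == k then X else E j)
  | BUInv k => fun j =>
      let X := E (ord_pred k) in let Y := E k in
      if [disjoint X & Y] then
        (if j == ord_pred k then Y else if j == k then X else E j)
      else
        (if j == ord_pred k then Y else if j == k then symdiff X Y else E j)
  end.

Definition tree_act N (V : finType) (s : seq (bcgen N)) (E : 'I_N -> {set V}) :=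
  foldr (@gen_tree_act N V) E s.

(* Main.v *)
Require Import Defs.
From HB Require Import structures.
From mathcomp Require Import all_boot all_fingroup.
From Stdlib Require Import Relations Lia.
From mathcomp Require Import zify.
Set Implicit Arguments. Unset Strict Implicit. Unset Printing Implicit Defensive.

Section Free.
Variable N : nat.
Implicit Types (u v w a b : fword N) (x : letter N).

Lemma inv_letterK : involutive (@inv_letter N).
Proof. by case=> i c; rewrite /inv_letter /= negbK. Qed.

Lemma inv_word_cat u w : inv_word (u ++ w) = inv_word w ++ inv_word u.
Proof. by rewrite /inv_word map_cat rev_cat. Qed.

Lemma inv_word_cons x w : inv_word (x :: w) = inv_word w ++ [:: inv_letter x].
Proof. by rewrite /inv_word /= rev_cons -cats1. Qed.

Lemma inv_wordK : involutive (@inv_word N).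
Proof.
move=> w; rewrite /inv_word map_rev revK -map_comp.
by rewrite (@eq_map _ _ _ id) ?map_id // => x /=; rewrite inv_letterK.
Qed.

Lemma feq_refl w : free_eq w w. Proof. exact: rst_refl. Qed.
Lemma feq_sym a b : free_eq a b -> free_eq b a. Proof. exact: rst_sym. Qed.
Lemma feq_trans a b c : free_eq a b -> free_eq b c -> free_eq a c.
Proof. exact: rst_trans. Qed.
Lemma feq_red a b : red_step a b -> free_eq a b. Proof. exact: rst_step. Qed.

Lemma red_ctx u w a b : red_step a b -> red_step (u ++ a ++ w) (u ++ b ++ w).
Proof.
case=> p q x.
have -> : u ++ (p ++ [:: x; inv_letter x] ++ q) ++ w = (u ++ p) ++ [:: x; inv_letter x] ++ (q ++ w) by rewrite !catA.
have -> : u ++ (p ++ q) ++ w = (u ++ p) ++ (q ++ w) by rewrite !catA.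
constructor.
Qed.

Lemma feq_ctx u w a b : free_eq a b -> free_eq (u ++ a ++ w) (u ++ b ++ w).
Proof.
elim=> [a' b' r|a'|a' b' _ IH|a' b' c' _ IH1 _ IH2].
- by apply: feq_red; apply: red_ctx.
- exact: feq_refl.
- exact: feq_sym.
- exact: feq_trans IH2.
Qed.

Lemma feq_cat a a' b b' : free_eq a a' -> free_eq b b' -> free_eq (a ++ b) (a' ++ b').
Proof.
move=> h1 h2; apply: (@feq_trans _ (a' ++ b)).
  by have := feq_ctx [::] b h1; rewrite /=.
by have := feq_ctx a' [::] h2; rewrite !cats0.
Qed.

Lemma feq_invK w : free_eq (w ++ inv_word w) [::].
Proof.
elim: w => [|x w IH] /=; first exact: feq_refl.
rewrite inv_word_cons catA.
apply: (@feq_trans _ ([:: x] ++ [::] ++ [:: inv_letter x])).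
  by have := feq_ctx [:: x] [:: inv_letter x] IH; rewrite /= -?catA.
by apply: feq_red; have := @RedStep N [::] [::] x; rewrite /=.
Qed.

Lemma red_inv a b : red_step a b -> red_step (inv_word a) (inv_word b).
Proof.
case=> p q x; rewrite !inv_word_cat.
have -> : inv_word [:: x; inv_letter x] = [:: x; inv_letter x].
  by rewrite /inv_word /= inv_letterK.
by rewrite -catA; apply: RedStep.
Qed.

Lemma feq_inv a b : free_eq a b -> free_eq (inv_word a) (inv_word b).
Proof.
elim=> [a' b' r|a'|a' b' _ IH|a' b' c' _ IH1 _ IH2].
- by apply: feq_red; apply: red_inv.
- exact: feq_refl.
- exact: feq_sym.
- exact: feq_trans IH2.
Qed.

Definition limg (phi : 'I_N -> fword N) (x : letter N) :=
  if x.2 then inv_word (phi x.1) else phi x.1.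

Lemma subst_cat phi u w : subst phi (u ++ w) = subst phi u ++ subst phi w.
Proof. by rewrite /subst map_cat flatten_cat. Qed.

Lemma subst_cons phi x w : subst phi (x :: w) = limg phi x ++ subst phi w.
Proof. by []. Qed.

Lemma limg_inv phi x : limg phi (inv_letter x) = inv_word (limg phi x).
Proof. by case: x => i [] /=; rewrite /limg /= ?inv_wordK. Qed.

Lemma subst_inv phi w : subst phi (inv_word w) = inv_word (subst phi w).
Proof.
elim: w => [|x w IH] //.
by rewrite inv_word_cons subst_cat IH subst_cons inv_word_cat /subst /= cats0 -limg_inv.
Qed.

Lemma subst_feq phi a b : free_eq a b -> free_eq (subst phi a) (subst phi b).
Proof.
elim=> [a' b' r|a'|a' b' _ IH|a' b' c' _ IH1 _ IH2].
- case: r => p q x; rewrite !subst_cat.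
  have -> : subst phi [:: x; inv_letter x] = limg phi x ++ inv_word (limg phi x) ++ [::].
    by rewrite -limg_inv.
  have H := feq_ctx (subst phi p) (subst phi q) (feq_invK (limg phi x)).
  by rewrite /= cats0.
- exact: feq_refl.
- exact: feq_sym.
- exact: feq_trans IH2.
Qed.

Lemma subst_feq_fun phi psi w : (forall i, free_eq (phi i) (psi i)) ->
  free_eq (subst phi w) (subst psi w).
Proof.
move=> h; elim: w => [|x w IH]; first exact: feq_refl.
rewrite !subst_cons; apply: feq_cat => //.
by case: x => i [] /=; rewrite /limg /=; [apply: feq_inv|]; apply: h.
Qed.

Lemma subst_comp phi psi w :
  subst phi (subst psi w) = subst (fun i => subst phi (psi i)) w.
Proof.
elim: w => [|x w IH] //.
rewrite !subst_cons subst_cat IH; congr (_ ++ _).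
by case: x => i [] //=; rewrite /limg /= subst_inv.
Qed.

Lemma subst_gl w : subst (@gl N) w = w.
Proof. by elim: w => [|[i c] w IH] //; rewrite subst_cons IH; case: c. Qed.

End Free.

Section Read.
Variables (N : nat) (V : finType) (sigma : 'I_N -> {perm V}).
Implicit Types (u w a b : fword N) (x : letter N).

Lemma read_cat v u w : read sigma v (u ++ w) = read sigma (read sigma v u) w.
Proof. by rewrite /read foldl_cat. Qed.

Lemma read_cons v x w : read sigma v (x :: w) = read sigma (step_letter sigma v x) w.
Proof. by []. Qed.

Lemma step_invK v x : step_letter sigma (step_letter sigma v x) (inv_letter x) = v.
Proof. by case: x => i [] /=; rewrite /step_letter /= ?permK ?permKV. Qed.

Lemma read_invK v w : read sigma (read sigma v w) (inv_word w) = v.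
Proof.
elim: w v => [|x w IH] v //.
by rewrite inv_word_cons read_cat read_cons IH /read /= step_invK.
Qed.

Lemma read_invK' v w : read sigma (read sigma v (inv_word w)) w = v.
Proof. by have := read_invK v (inv_word w); rewrite inv_wordK. Qed.

Lemma read_feq v a b : free_eq a b -> read sigma v a = read sigma v b.
Proof.
move=> h; elim: h v => [a' b' r|a'|a' b' _ IH|a' b' c' _ IH1 _ IH2] v //.
- case: r => p q x; rewrite !read_cat.
  by rewrite /read /= step_invK.
- by rewrite IH1 IH2.
Qed.

End Read.

Lemma read_ext N (V : finType) (s1 s2 : 'I_N -> {perm V}) :
  (forall k, s1 k = s2 k) -> forall v w, read s1 v w = read s2 v w.
Proof.
move=> h v w; elim: w v => [|x w IH] v //.
by rewrite !read_cons IH /step_letter h.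
Qed.

Lemma read_subst N (V : finType) (s t : 'I_N -> {perm V}) phi :
  (forall i v, read t v (phi i) = s i v) ->
  forall w v, read t v (subst phi w) = read s v w.
Proof.
move=> h; elim=> [|x w IH] v //.
rewrite subst_cons read_cat IH read_cons; congr (read s _ w).
case: x => i [] /=; rewrite /limg /step_letter /=; last exact: h.
by rewrite -{1}[v](permKV (s i)) -h read_invK.
Qed.

Section Graph.
Variables (N : nat) (V : finType).
Implicit Types (E : 'I_N -> {set V}) (P : pred 'I_N).

Definition edgeR P E : rel V := fun x y => [exists j, [&& P j, x \in E j & y \in E j]].
Definition conn P E x y := connect (edgeR P E) x y.
Definition without P k : pred 'I_N := fun j => P j && (j != k).

Lemma edgeR_sym P E : ssrbool.symmetric (edgeR P E).
Proof.
move=> x y; apply/existsP/existsP => -[j /and3P[a b c]]; exists j; by apply/and3P.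
Qed.

Lemma conn_sym P E x y : conn P E x y = conn P E y x.
Proof. exact: (sym_connect_sym (edgeR_sym P E)). Qed.

Lemma conn_trans P E x y z : conn P E x y -> conn P E y z -> conn P E x z.
Proof. exact: connect_trans. Qed.

Lemma conn_refl P E x : conn P E x x. Proof. exact: connect0. Qed.

Lemma conn_edge P E j x y : P j -> x \in E j -> y \in E j -> conn P E x y.
Proof. by move=> *; apply: connect1; apply/existsP; exists j; apply/and3P. Qed.

Lemma conn_mono P P' E E' :
  (forall j x y, P' j -> x \in E' j -> y \in E' j -> conn P E x y) ->
  forall a b, conn P' E' a b -> conn P E a b.
Proof.
move=> h; apply: connect_sub => x y /existsP[j /and3P[pj hx hy]]; exact: h pj hx hy.
Qed.

Lemma conn_first P E k x y a b : P k -> (forall z, z \in E k -> z = x \/ z = y) ->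
  conn P E a b ->
  [\/ conn (without P k) E a b, conn (without P k) E a x | conn (without P k) E a y].
Proof.
move=> pk hk /connectP[p hp ->].
elim: p a hp => [|c p IH] a /=; first by move=> _; apply: Or31; apply: conn_refl.
case/andP=> /existsP[j /and3P[pj ha hc]] hp.
case: (eqVneq j k) => [ejk|njk].
- subst j; case: (hk a ha) => ->; [apply: Or32|apply: Or33]; exact: conn_refl.
- have hac : conn (without P k) E a c.
    by apply: (@conn_edge _ E j) => //; rewrite /without pj njk.
  case: (IH c hp) => h; [apply: Or31|apply: Or32|apply: Or33]; exact: conn_trans hac h.
Qed.

Lemma conn_last P E k x y a b : P k -> (forall z, z \in E k -> z = x \/ z = y) ->
  conn P E a b ->
  [\/ conn (without P k) E a b, conn (without P k) E x b | conn (without P k) E y b].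
Proof.
move=> pk hk; rewrite conn_sym => /(conn_first pk hk).
by rewrite !(conn_sym _ _ b) => -[h|h|h]; [apply: Or31|apply: Or32|apply: Or33].
Qed.

Definition sw (X : {set V}) : {perm V} :=
  if [pick x in X] is Some a then
    (if [pick y in X | y != a] is Some b then tperm a b else 1%g) else 1%g.

Lemma sw2 a b : a != b -> sw [set a; b] = tperm a b.
Proof.
move=> nab; rewrite /sw; case: pickP => [x hx|h]; last by have := h a; rewrite !inE eqxx.
case: pickP => [y /andP[hy nyx]|h].
  move: hx hy nyx; rewrite !inE => /orP[]/eqP-> /orP[]/eqP->; rewrite ?eqxx //.
  by rewrite tpermC.
move: hx; rewrite !inE => /orP[]/eqP ex; subst x.
  by have := h b; rewrite !inE eqxx orbT eq_sym nab.
by have := h a; rewrite !inE eqxx /= nab.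
Qed.

Definition two (X : {set V}) := exists a b, a <> b /\ X = [set a; b].

Lemma set2C (a b : V) : [set a; b] = [set b; a].
Proof. by rewrite setUC. Qed.

End Graph.

Lemma tpermE' (T : finType) (x y z : T) :
  tperm x y z = if z == x then y else if z == y then x else z.
Proof. by case: tpermP => [->|->|]; rewrite ?eqxx //; [case: eqP|move/eqP/negbTE->; move/eqP/negbTE->]. Qed.

Ltac neqrw := repeat match goal with
 | H : is_true (?x != ?y) |- context [?x == ?y] => rewrite (negbTE H)
 | H : is_true (?x != ?y) |- context [?y == ?x] => rewrite [y == x]eq_sym (negbTE H)
 end.
Ltac tfin := rewrite ?tpermE'; repeat (progress (rewrite ?eqxx /=; neqrw)).
Ltac vc v a := case: (eqVneq v a) => [->|?].

Lemma tp_conj (T : finType) (a b c v : T) : a != b -> a != c -> b != c ->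
  tperm a b (tperm b c (tperm a b v)) = tperm a c v.
Proof. by move=> *; vc v a; [|vc v b; [|vc v c]]; tfin. Qed.

Lemma circ_seq N (V : finType) (sigma : 'I_N -> {perm V}) (c : seq V) (x0 : V) (ks : nat -> 'I_N) :
  uniq c -> 0 < size c ->
  (forall i, i < size c -> sigma (ks i) (nth x0 c i) = nth x0 c (i.+1 %% size c)) ->
  circuit sigma (fun i : 'I_(size c) => nth x0 c i) (fun i => ks i).
Proof.
move=> uc c0 h; split => //; split.
  by move=> i j /eqP; rewrite nth_uniq // => /eqP /val_inj.
by move=> i; rewrite h.
Qed.

Lemma I2_cases (i : 'I_2) : i = ord0 \/ i = ord_max.
Proof. by case: i => [[|[|i]] hi]; [left|right|]; try apply: val_inj. Qed.

Lemma ordS_I2_0 : ordS (ord0 : 'I_2) = ord_max. Proof. exact: val_inj. Qed.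
Lemma ordS_I2_1 : ordS (ord_max : 'I_2) = ord0. Proof. exact: val_inj. Qed.

Lemma tperm_two (V : finType) (a b u w : V) : a != b -> u \in [set a; b] -> w \in [set a; b] ->
  u != w -> tperm a b u = w.
Proof.
move=> nab; rewrite !inE => /orP[]/eqP-> /orP[]/eqP->; rewrite ?eqxx // => _;
  by rewrite ?tpermL ?tpermR.
Qed.

Lemma gamma_tperm N (V : finType) (sigma : 'I_N -> {perm V}) k (a b : V) :
  a != b -> sigma k = tperm a b -> gamma sigma k = [set a; b].
Proof.
move=> nab hk; apply/setP => v; rewrite /gamma /gamma_edge inE hk.
apply/existsP/idP => [[w /and3P[nvw /eqP e1 /eqP e2]]|].
  apply/negPn/negP; rewrite !inE negb_or => /andP[h1 h2]; move: e1.
  by rewrite tpermD 1?eq_sym // => e1; rewrite e1 eqxx in nvw.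
rewrite !inE => /orP[]/eqP->.
  by exists b; rewrite tpermL tpermR !eqxx nab.
by exists a; rewrite tpermL tpermR !eqxx eq_sym nab.
Qed.

Definition treeE N (V : finType) (E : 'I_N -> {set V}) (B : V) :=
  [/\ (forall k, two (E k)), (forall v, conn predT E B v) &
  (forall k x y, x \in E k -> y \in E k -> x != y -> ~~ conn (without predT k) E x y)].

Lemma two_tperm (V : finType) (X : {set V}) : two X ->
  exists a b, [/\ a != b, X = [set a; b] & sw X = tperm a b].
Proof. case=> a [b [nab ->]]; have nab' : a != b by apply/eqP. by exists a, b; split; rewrite ?sw2. Qed.

Lemma sw_two (V : finType) (X : {set V}) u w : two X -> u \in X -> w \in X -> u != w ->
  sw X u = w.
Proof. by case/two_tperm => a [b [nab -> ->]]; apply: tperm_two. Qed.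

Lemma sw_mem (V : finType) (X : {set V}) u : two X -> sw X u = u \/ (u \in X /\ sw X u \in X).
Proof.
case/two_tperm => a [b [nab -> ->]]; rewrite !inE.
case: tpermP => [->|->|]; rewrite ?eqxx ?orbT; auto.
Qed.

Lemma conn_step N (V : finType) (E : 'I_N -> {set V}) (sigma : 'I_N -> {perm V}) :
  (forall k, sigma k = sw (E k)) -> (forall k, two (E k)) ->
  forall x l, conn predT E x (step_letter sigma x l).
Proof.
move=> hE h2 x [k c]; rewrite /step_letter /=.
have [a [b [nab ek sk]]] := two_tperm (h2 k).
have -> : (if c then (sigma k)^-1%g x else sigma k x) = tperm a b x.
  by rewrite hE sk; case: c; rewrite ?tpermV.
case: tpermP => [->|->|_ _]; last exact: conn_refl.
  by apply: (@conn_edge _ _ _ _ k); rewrite // ek !inE eqxx ?orbT.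
by apply: (@conn_edge _ _ _ _ k); rewrite // ek !inE eqxx ?orbT.
Qed.

Lemma conn_read N (V : finType) (E : 'I_N -> {set V}) (sigma : 'I_N -> {perm V}) :
  (forall k, sigma k = sw (E k)) -> (forall k, two (E k)) ->
  forall w x, conn predT E x (read sigma x w).
Proof.
move=> hE h2; elim=> [|l w IH] x; first exact: conn_refl.
rewrite read_cons; apply: conn_trans (IH _); exact: conn_step.
Qed.

Section T1.
Variables (N : nat) (V : finType) (sigma : 'I_N -> {perm V}) (B : V).
Hypothesis htl : tree_like sigma.
Hypothesis hconn : connected_cov sigma B.

Lemma T1_perm k : exists a b, a != b /\ sigma k = tperm a b.
Proof.
case: htl => h1 [h2 h3].
case: (h3 k) => vs [ks [[_ [injv hs]] [hk huniq]]].
set a := vs ord0; set b := vs ord_max.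
have nab : a != b by apply/eqP => /injv.
have sa : sigma k a = b by rewrite /a -(hk ord0) hs ordS_I2_0.
have sb : sigma k b = a by rewrite /b -(hk ord_max) hs ordS_I2_1.
exists a, b; split => //; apply/permP => v.
case: (eqVneq v a) => [->|nva]; first by rewrite sa tpermL.
case: (eqVneq v b) => [->|nvb]; first by rewrite sb tpermR.
rewrite tpermD 1?eq_sym //.
apply/eqP/negPn/negP => nfix.
case: (eqVneq (sigma k (sigma k v)) v) => [e2|n2].
- pose vs' := fun i : 'I_2 => if i == ord0 then v else sigma k v.
  have c2 : circuit sigma vs' (fun _ => k).
    split => //; split.
      move=> i j; case: (I2_cases i) => ->; case: (I2_cases j) => -> //;
        rewrite /vs' /= => e.
        by move: nfix; rewrite -e eqxx.
      by rewrite e eqxx in nfix.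
    move=> i; case: (I2_cases i) => ->; rewrite ?ordS_I2_0 ?ordS_I2_1 /vs' //=.
  case: (huniq vs' (fun _ => k) c2 (fun _ => erefl)); rewrite /vs' /= => -[e _].
    by rewrite e eqxx in nva.
  by rewrite e eqxx in nvb.
- set f := (sigma k : V -> V).
  pose m := fingraph.order f v.
  have finj : injective f by apply: perm_inj.
  have hc := @circ_seq N V sigma (fingraph.orbit f v) v (fun _ => k) (fingraph.orbit_uniq f v).
  rewrite fingraph.size_orbit in hc.
  have hnth : forall i, i < fingraph.order f v -> nth v (fingraph.orbit f v) i = iter i f v.
    by move=> i hi; rewrite /fingraph.orbit nth_traject.
  have c := hc (fingraph.order_gt0 f v).
  have cc : circuit sigma (fun i : 'I_(fingraph.order f v) => nth v (fingraph.orbit f v) i) (fun=> k).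
    apply: c => i hi; rewrite hnth //.
    case: (ltngtP i.+1 (fingraph.order f v)) => [lt|gt|he].
      by rewrite modn_small // hnth.
    by move: gt; rewrite ltnS leqNgt hi.
    by rewrite he modnn hnth ?fingraph.order_gt0 //= -iterS he fingraph.iter_order.
  have := h1 _ _ _ cc.
  have := fingraph.order_gt0 f v.
  case: (fingraph.order f v) (fingraph.iter_order finj v) => [|[|[|m']]] //= hit _ _.
  + by case/negP: nfix; apply/eqP; exact: hit.
  + by case/negP: n2; apply/eqP; exact: hit.
Qed.

Lemma T1_two k : two (gamma sigma k).
Proof.
case: (T1_perm k) => a [b [nab hk]]; exists a, b; split; first exact/eqP.
exact: gamma_tperm.
Qed.

Lemma T1_sw k : sigma k = sw (gamma sigma k).
Proof. by case: (T1_perm k) => a [b [nab hk]]; rewrite (gamma_tperm nab hk) sw2. Qed.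

Lemma T1_mv j u w : u \in gamma sigma j -> w \in gamma sigma j -> u != w -> sigma j u = w.
Proof. by rewrite T1_sw; apply: sw_two; apply: T1_two. Qed.

Lemma T1_bridge k x y : x \in gamma sigma k -> y \in gamma sigma k -> x != y ->
  ~~ conn (without predT k) (gamma sigma) x y.
Proof.
case: htl => h1 [h2 h3].
move=> hx hy nxy; apply/negP => /connectP [p hp ely].
move: ely nxy hy; case: (shortenP hp) => p' hp' up' _ ely nxy hy.
set E := gamma sigma in hx hy hp' *.
set c := x :: p'.
have hlast : nth x c (size p') = y by rewrite ely (last_nth x).
pose ks := fun i => if i.+1 == size c then k
  else odflt k [pick j | [&& j != k, nth x c i \in E j & nth x c i.+1 \in E j]].
have hedge : forall i, i < size p' -> exists2 j, j != k & (nth x c i \in E j) && (nth x c i.+1 \in E j).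
  move=> i hi; move/pathP: hp' => /(_ x i hi) /existsP [j /and3P[/andP[_ njk] h1' h2']].
  by exists j => //; apply/andP; split.
have hks : forall i, i < size p' -> ks i != k /\ (nth x c i \in E (ks i)) && (nth x c i.+1 \in E (ks i)).
  move=> i hi; rewrite /ks /= eqSS ltn_eqF //.
  case: pickP => [j /and3P[njk a1 a2]|none]; first by rewrite /= njk a1 a2.
  by case: (hedge i hi) => j njk /andP[a1 a2]; move: (none j); rewrite njk a1 a2.
have cc : circuit sigma (fun i : 'I_(size c) => nth x c i) (fun i => ks i).
  apply: circ_seq => // i hi.
  case: (ltngtP i.+1 (size c)) => [lt|gt|he].
  - rewrite modn_small //.
    have hi' : i < size p' by rewrite /c /= ltnS in lt.
    case: (hks i hi') => _ /andP[a1 a2]; apply: T1_mv => //.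
    by rewrite nth_uniq // ?(ltnW lt) // neq_ltn ltnSn.
  - by move: gt; rewrite ltnS leqNgt hi.
  - rewrite he modnn /ks he eqxx.
    have -> : i = size p' by move: he; rewrite /c /= => -[].
    rewrite hlast; apply: T1_mv => //; by rewrite eq_sym.
have hs := h1 _ _ _ cc.
case E1: p' => [|y' [|z p'']].
- by move: ely nxy; rewrite E1 /= => ->; rewrite eqxx.
- rewrite /c E1 in cc; have := h2 _ _ cc.
  have h0 : 0 < size p' by rewrite E1.
  have [nk _] := hks 0 h0.
  rewrite /ks /c E1 /= in nk * => e.
  by rewrite e eqxx in nk.
- by move: hs; rewrite /c E1.
Qed.

Lemma T1_tree : treeE (gamma sigma) B.
Proof.
split; [exact: T1_two| |exact: T1_bridge].
move=> v; case: (hconn v) => w <-; apply: conn_read; [exact: T1_sw|exact: T1_two].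
Qed.
End T1.

Definition invc N (V : finType) (E : 'I_N -> {set V}) : 'I_N -> {perm V} := fun k => sw (E k).

Lemma two3 (V : finType) (X : {set V}) p q u : two X -> p \in X -> q \in X -> p != q ->
  u \in X -> u = p \/ u = q.
Proof.
case=> a [b [nab ->]]; rewrite !inE.
by move=> /orP[]/eqP-> /orP[]/eqP-> //; rewrite ?eqxx // => _ /orP[]/eqP->; auto.
Qed.

Lemma sw_moved (V : finType) (X : {set V}) u : two X -> sw X u != u -> u \in X /\ sw X u \in X.
Proof. by move=> h2; case: (sw_mem u h2) => [->|//]; rewrite eqxx. Qed.

Section T2.
Variables (N : nat) (V : finType) (E : 'I_N -> {set V}) (B : V).
Hypothesis hT : treeE E B.

Lemma T2_two k : two (E k). Proof. by case: hT. Qed.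
Lemma T2_bridge k x y : x \in E k -> y \in E k -> x != y -> ~~ conn (without predT k) E x y.
Proof. by case: hT => _ _; apply. Qed.

Lemma T2_gamma k : gamma (invc E) k = E k.
Proof.
have [a [b [nab ek sk]]] := two_tperm (T2_two k).
by rewrite (@gamma_tperm N V (invc E) k a b nab sk) ek.
Qed.

Lemma T2_conn : connected_cov (invc E) B.
Proof.
move=> v; case: hT => _ hc _; move/connectP: (hc v) => [p hp ->] {hc}.
elim: p B hp => [|c p IH] x /=; first by exists [::].
case/andP=> /existsP[j /and3P[_ hx hc]] /IH [w hw].
case: (eqVneq x c) => [->|nxc]; first by exists w.
exists ((j, false) :: w); rewrite read_cons /step_letter /= /invc.
by rewrite (sw_two (T2_two j) hx hc nxc).
Qed.

Lemma T2_tl : tree_like (invc E).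
Proof.
split; [|split].
- case=> [|m] vs ks [//= _ [injv hs]].
  rewrite leqNgt; apply/negP => hm.
  pose f i := vs (inord i); pose l i := ks (inord i).
  have hsf : forall i, i < m -> invc E (l i) (f i) = f i.+1.
    move=> i hi; rewrite /f /l hs; congr vs; apply: val_inj.
    by rewrite /= !inordK ?modn_small // ltnS // ltnW.
  have hsl : invc E (l m) (f m) = f 0.
    rewrite /f /l hs; congr vs; apply: val_inj.
    by rewrite /= !inordK ?modnn.
  have finj : forall i j, i <= m -> j <= m -> f i = f j -> i = j.
    move=> i j hi hj /injv /(congr1 val); rewrite /= !inordK //.
  have hmv : forall i, i <= m -> f i \in E (l i) /\ (if i == m then f 0 else f i.+1) \in E (l i)
       /\ f i != (if i == m then f 0 else f i.+1).
    move=> i hi.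
    have ne : f i != (if i == m then f 0 else f i.+1).
      apply/eqP; case: ifP => [/eqP him|him] e.
        have e0 : i = 0 by apply: finj.
        by move: hm; rewrite -him e0.
      have : i = i.+1 by apply: finj => //; rewrite ltn_neqAle him hi.
      lia.
    have hsi : invc E (l i) (f i) = (if i == m then f 0 else f i.+1).
      by case: ifP => [/eqP ->|him]; [apply: hsl|apply: hsf; rewrite ltn_neqAle him].
    move: (ne); rewrite -{1}hsi eq_sym => /(sw_moved (T2_two _)) [a1 a2].
    by split => //; split => //; rewrite -hsi.
  have m2 : 2 <= m by [].
  have hl : forall i, 0 < i <= m -> l i != l 0.
    move=> i /andP[i0 im]; apply/eqP => e.
    have [a0 [a1 n01]] := hmv 0 (leq0n _).
    have m0 : (0 == m) = false by apply/negbTE/eqP; lia.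
    rewrite m0 in a1 n01.
    have [b0 [b1 _]] := hmv i im.
    rewrite e in b0 b1.
    case: (two3 (T2_two _) a0 a1 n01 b0) => /finj.
      by move=> /(_ im (leq0n _)) ei; move: i0; rewrite ei.
    move=> /(_ im (ltnW m2)) => ei; subst i.
    have m1 : (1 == m) = false by apply/negbTE/eqP; lia.
    rewrite m1 in b1.
    case: (two3 (T2_two _) a0 a1 n01 b1) => /finj.
      by move=> /(_ (m2) (leq0n _)).
    by move=> /(_ m2 (ltnW m2)).
  have hc : forall i, 0 < i <= m -> conn (without predT (l 0)) E (f 1) (f i).
    elim=> [//|i IH] /andP[_ im].
    case: (posnP i) => [->|ip]; first exact: conn_refl.
    apply: conn_trans (IH _) _; first by rewrite ip ltnW.
    have [b0 [b1 _]] := hmv i (ltnW im).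
    have nim : (i == m) = false by apply/negbTE/eqP; lia.
    rewrite nim in b1.
    apply: (@conn_edge _ _ _ _ (l i)) => //.
    by rewrite /without /= hl // ip ltnW.
  have [a0 [a1 n01]] := hmv 0 (leq0n _).
  have m0 : (0 == m) = false by apply/negbTE/eqP; lia.
  rewrite m0 in a1 n01.
  have := T2_bridge a0 a1 n01; rewrite conn_sym => /negP; apply.
  have [c0 [c1 _]] := hmv m (leqnn _); rewrite eqxx in c1.
  apply: conn_trans (hc m _) _; first by rewrite leqnn andbT; lia.
  apply: (@conn_edge _ _ _ _ (l m)) => //.
  by rewrite /without /= hl // leqnn andbT; lia.
- move=> vs ks [_ [injv hs]].
  have n01 : vs ord0 != vs ord_max by apply/eqP => /injv.
  have h0 := hs ord0; have h1 := hs ord_max.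
  rewrite ordS_I2_0 /invc in h0; rewrite ordS_I2_1 /invc in h1.
  have [a0 a1] : vs ord0 \in E (ks ord0) /\ sw (E (ks ord0)) (vs ord0) \in E (ks ord0).
    by apply: sw_moved; [exact: T2_two|rewrite h0 eq_sym].
  have [b0 b1] : vs ord_max \in E (ks ord_max) /\ sw (E (ks ord_max)) (vs ord_max) \in E (ks ord_max).
    by apply: sw_moved; [exact: T2_two|rewrite h1].
  rewrite h0 in a1; rewrite h1 in b1.
  case: (eqVneq (ks ord0) (ks ord_max)) => // ne.
  have := T2_bridge a0 a1 n01 => /negP; case.
  apply: (@conn_edge _ _ _ _ (ks ord_max)) => //.
  by rewrite /without /= eq_sym ne.
- move=> k; have [a [b [nab ek sk]]] := two_tperm (T2_two k).
  exists (fun i : 'I_2 => if i == ord0 then a else b), (fun _ => k).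
  split; [split; [by []|split]|split; [by []|]].
  + move=> i j; case: (I2_cases i) => ->; case: (I2_cases j) => -> //= e.
      by move: nab; rewrite e eqxx.
    by move: nab; rewrite e eqxx.
  + move=> i; case: (I2_cases i) => ->; rewrite ?ordS_I2_0 ?ordS_I2_1 /invc sk /=.
      by rewrite tpermL.
    by rewrite tpermR.
  + move=> vs' ks' [_ [inj' hs']] hk'.
    have n' : vs' ord0 != vs' ord_max by apply/eqP => /inj'.
    have h0 := hs' ord0; rewrite ordS_I2_0 hk' /invc in h0.
    have [a0 a1] : vs' ord0 \in E k /\ sw (E k) (vs' ord0) \in E k.
      by apply: sw_moved; [exact: T2_two|rewrite h0 eq_sym].
    rewrite h0 ek !inE in a0 a1 *.
    move: n'; case/orP: a0 => /eqP ->; case/orP: a1 => /eqP -> //=; rewrite ?eqxx //; auto.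
Qed.
End T2.

Section IsoMap.
Variables (N : nat) (V1 V2 : finType) (s1 : 'I_N -> {perm V1}) (s2 : 'I_N -> {perm V2}).
Variables (B1 : V1) (B2 : V2).
Hypothesis c1 : connected_cov s1 B1.
Hypothesis hg : forall w, in_g s1 B1 w -> in_g s2 B2 w.

Lemma read_transfer w1 w2 : read s1 B1 w1 = read s1 B1 w2 -> read s2 B2 w1 = read s2 B2 w2.
Proof.
move=> e; have h : in_g s1 B1 (w1 ++ inv_word w2) by rewrite /in_g read_cat e read_invK.
move/hg: h; rewrite /in_g read_cat => h.
by rewrite -{2}h read_invK'.
Qed.

Lemma iso_map : exists f : V1 -> V2, forall w, f (read s1 B1 w) = read s2 B2 w.
Proof.
have ex : forall v, exists w : seq ('I_N * bool), read s1 B1 w == v.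
  by move=> v; case: (c1 v) => w hw; exists w; apply/eqP.
exists (fun v => read s2 B2 (xchoose (ex v))) => w.
apply: read_transfer; exact/eqP/(xchooseP (ex (read s1 B1 w))).
Qed.
End IsoMap.

Section Transport.
Variables (N : nat) (V1 V2 : finType) (s1 : 'I_N -> {perm V1}) (s2 : 'I_N -> {perm V2}).
Variables (f : V1 -> V2) (g : V2 -> V1).
Hypotheses (fK : cancel f g) (gK : cancel g f).
Hypothesis hf : forall k v, f (s1 k v) = s2 k (f v).

Lemma hg_comm k u : g (s2 k u) = s1 k (g u).
Proof. by rewrite -{1}(gK u) -hf fK. Qed.

Lemma circ_f m (vs : 'I_m -> V1) ks : circuit s1 vs ks -> circuit s2 (fun i => f (vs i)) ks.
Proof.
case=> m0 [inj hs]; split => //; split; first by move=> i j /(can_inj fK) /inj.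
by move=> i; rewrite -hf hs.
Qed.

Lemma circ_g m (vs : 'I_m -> V2) ks : circuit s2 vs ks -> circuit s1 (fun i => g (vs i)) ks.
Proof.
case=> m0 [inj hs]; split => //; split; first by move=> i j /(can_inj gK) /inj.
by move=> i; rewrite -hg_comm hs.
Qed.

Lemma gamma_transport k : gamma s2 k = f @: gamma s1 k.
Proof.
apply/setP => u; rewrite -(gK u) mem_imset; last exact: can_inj fK.
rewrite /gamma !inE; apply/existsP/existsP => -[w hw].
  exists (g w); move: hw; rewrite /gamma_edge -{1 2 3}(gK w) -!hf !(inj_eq (can_inj fK)).
  by [].
exists (f w); move: hw; rewrite /gamma_edge -!hf !(inj_eq (can_inj fK)).
by [].
Qed.

Lemma tl_transport : tree_like s1 -> tree_like s2.
Proof.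
case=> h1 [h2 h3]; split; [|split].
- by move=> m vs ks /circ_g /h1.
- by move=> vs ks /circ_g /h2.
- move=> k; case: (h3 k) => vs [ks [cc [hk hu]]].
  exists (fun i => f (vs i)), ks; split; first exact: circ_f.
  split => // vs' ks' /circ_g cc' hk'.
  case: (hu _ _ cc' hk') => -[e1 e2]; [left|right];
    by rewrite -e1 -e2 !gK.
Qed.
End Transport.

Lemma pred_neq N (hN : 2 <= N) (k : 'I_N) : ord_pred k != k.
Proof.
apply/eqP => /(congr1 val) /=; have := ltn_ord k.
case: (posnP k) => [->|kp] hk.
  by rewrite add0n modn_small; lia.
rewrite -subn1 -addnBAC // modnDr modn_small; lia.
Qed.

Definition ginv N (g : bcgen N) : bcgen N :=
  match g with BLam => BLamInv | BLamInv => BLam | BU k => BUInv k | BUInv k => BU k end.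

Lemma red_at N (u w : fword N) x : free_eq (u ++ [:: x; inv_letter x] ++ w) (u ++ w).
Proof. exact/feq_red/RedStep. Qed.

Lemma S3 N (hN : 2 <= N) (g : bcgen N) i :
  free_eq (subst (gen_img g) (gen_img (ginv g) i)) (gl i).
Proof.
case: g => [||k|k] /=.
- by rewrite /subst /= ?cats0 ord_predK; apply: feq_refl.
- by rewrite /subst /= ?cats0 ordSK; apply: feq_refl.
- have nk := pred_neq hN k; have nk' : k != ord_pred k by rewrite eq_sym.
  case: (eqVneq i k) => [->|nik].
    by rewrite /subst /= eqxx ?cats0; apply: feq_refl.
  case: (eqVneq i (ord_pred k)) => [->|nipk].
    rewrite /subst /=; do 3 rewrite ?eqxx ?(negbTE nk') ?(negbTE nk) /=.
    apply: feq_trans (red_at [::] [:: (ord_pred k, false); (k, false); (k, true)] (k, false)) _.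
    exact: (red_at [:: (ord_pred k, false)] [::] (k, false)).
  by rewrite /subst /= (negbTE nik) (negbTE nipk) ?cats0; apply: feq_refl.
- have nk := pred_neq hN k; have nk' : k != ord_pred k by rewrite eq_sym.
  case: (eqVneq i (ord_pred k)) => [->|nipk].
    by rewrite /subst /= eqxx ?cats0; apply: feq_refl.
  case: (eqVneq i k) => [->|nik].
    rewrite /subst /=; do 3 rewrite ?eqxx ?(negbTE nk') ?(negbTE nk) /=.
    apply: feq_trans (red_at [::] [:: (k, false); (ord_pred k, true); (ord_pred k, false)] (ord_pred k, true)) _.
    exact: (red_at [:: (k, false)] [::] (ord_pred k, true)).
  by rewrite /subst /= (negbTE nik) (negbTE nipk) ?cats0; apply: feq_refl.
Qed.

Lemma read_gl N (V : finType) (s : 'I_N -> {perm V}) v i : read s v (gl i) = s i v.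
Proof. by []. Qed.
Lemma read_glinv N (V : finType) (s : 'I_N -> {perm V}) v i : read s v (glinv i) = (s i)^-1%g v.
Proof. by []. Qed.

Lemma sw_inv (V : finType) (X : {set V}) : two X -> ((sw X)^-1)%g = sw X.
Proof. by case/two_tperm => a [b [_ _ ->]]; rewrite tpermV. Qed.

Section Step.
Variables (N : nat) (V : finType) (B : V).
Implicit Types (E : 'I_N -> {set V}) (P : pred 'I_N).

Lemma conn_monoP P P' E x y : (forall j, P j -> P' j) -> conn P E x y -> conn P' E x y.
Proof.
move=> h; apply: conn_mono => j a b pj ha hb; apply: (@conn_edge _ _ _ _ j) => //; exact: h.
Qed.

Lemma conn_eqE P E E' x y : (forall j, P j -> E' j = E j) -> conn P E' x y -> conn P E x y.
Proof.
move=> h; apply: conn_mono => j a b pj; rewrite h // => ha hb.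
exact: (@conn_edge _ _ _ _ j).
Qed.

Lemma bridge_pair P E (a b x y : V) : ~~ conn P E a b -> x \in [set a; b] -> y \in [set a; b] ->
  x != y -> ~~ conn P E x y.
Proof.
move=> h; rewrite !inE => /orP[]/eqP-> /orP[]/eqP->; rewrite ?eqxx // => _.
by rewrite conn_sym.
Qed.

Lemma relabel (p q : 'I_N -> 'I_N) (pK : cancel p q) (qK : cancel q p) E E' :
  (forall j, E' j = E (p j)) -> treeE E B -> treeE E' B.
Proof.
move=> hE [h2 hc hb]; split.
- by move=> k; rewrite hE.
- move=> v; apply: conn_mono (hc v) => j x y _ hx hy.
  by apply: (@conn_edge _ _ _ _ (q j)); rewrite // hE qK.
- move=> k x y; rewrite hE => hx hy nxy; apply/negP => hcon.
  have := hb _ _ _ hx hy nxy; move/negP; apply.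
  apply: conn_mono hcon => j a b /andP[_ njk]; rewrite hE => ha hb'.
  apply: (@conn_edge _ _ _ _ (p j)) => //; rewrite /without /=.
  by apply: contra njk => /eqP /(can_inj pK) ->.
Qed.
End Step.

Lemma nondisj (V : finType) (X Y : {set V}) : two X -> two Y -> ~~ [disjoint X & Y] -> X != Y ->
  exists A Bv C, [/\ A != Bv, A != C, Bv != C, X = [set A; Bv] & Y = [set A; C]].
Proof.
case=> a [b [nab0 ->]] [c [d [ncd0 ->]]] /pred0Pn [z /andP[]]; rewrite /= !inE.
have nab : a != b by apply/eqP. have ncd : c != d by apply/eqP.
move=> /orP[]/eqP ez /orP[]/eqP ez'; subst z => nXY.
- subst c; exists a, b, d; split => //.
  by apply: contra nXY => /eqP <-.
- subst d; exists a, b, c; rewrite [[set c; a]]set2C; split => //; rewrite 1?eq_sym //.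
  by apply: contra nXY => /eqP <-; rewrite set2C.
- subst c; exists b, a, d; rewrite [[set a; b]]set2C; split => //; rewrite 1?eq_sym //.
  by apply: contra nXY => /eqP <-; rewrite set2C.
- subst d; exists b, a, c; rewrite [[set a; b]]set2C [[set c; b]]set2C; split => //; rewrite 1?eq_sym //.
  by apply: contra nXY => /eqP <-.
Qed.

Lemma symdiff_form (V : finType) (A Bv C : V) : A != Bv -> A != C -> Bv != C ->
  symdiff [set A; Bv] [set A; C] = [set Bv; C].
Proof.
move=> h1 h2 h3; apply/setP => v; rewrite /symdiff !inE.
have hxy : ~~ ((v == A) && (v == Bv)) by apply/andP => -[/eqP-> /eqP e]; rewrite e eqxx in h1.
have hxz : ~~ ((v == A) && (v == C)) by apply/andP => -[/eqP-> /eqP e]; rewrite e eqxx in h2.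
have hyz : ~~ ((v == Bv) && (v == C)) by apply/andP => -[/eqP-> /eqP e]; rewrite e eqxx in h3.
by move: hxy hxz hyz; case: (v == A); case: (v == Bv); case: (v == C).
Qed.

Section TP.
Variables (T : finType) (a b c d v : T).
Lemma tp_comm : a != b -> c != d -> a != c -> a != d -> b != c -> b != d ->
  tperm a b (tperm c d (tperm a b v)) = tperm c d v.
Proof. by move=> *; vc v a; [|vc v b; [|vc v c; [|vc v d]]]; tfin. Qed.
Lemma tp_I2 : a != b -> a != c -> b != c -> tperm a b (tperm a c (tperm a b v)) = tperm b c v.
Proof. by move=> *; vc v a; [|vc v b; [|vc v c]]; tfin. Qed.
Lemma tp_I3 : a != b -> a != c -> b != c -> tperm a c (tperm b c (tperm a c v)) = tperm a b v.
Proof. by move=> *; vc v a; [|vc v b; [|vc v c]]; tfin. Qed.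
Lemma tp_I4 : a != b -> a != c -> b != c -> tperm a c (tperm a b (tperm a c v)) = tperm b c v.
Proof. by move=> *; vc v a; [|vc v b; [|vc v c]]; tfin. Qed.
End TP.

Section StepU.
Variables (N : nat) (V : finType) (B : V).
Hypothesis hN : 2 <= N.

Lemma step_BU (E : 'I_N -> {set V}) (k : 'I_N) : treeE E B ->
  let E' := gen_tree_act (BU k) E in
  treeE E' B /\ (forall i v, read (invc E') v (gen_img (BU k) i) = invc E i v) /\
  (forall i v, read (invc E) v (gen_img (BUInv k) i) = invc E' i v).
Proof.
move=> hT E'; have [h2 hc hb] := hT.
have nk : ord_pred k != k := pred_neq hN k.
have nk' : k != ord_pred k by rewrite eq_sym.
set pk := ord_pred k in nk nk' E' *.
have [a [b [nab ex sx]]] := two_tperm (h2 pk).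
have [c [d [ncd ey sy]]] := two_tperm (h2 k).
case hd: [disjoint E pk & E k].
- have hE' : forall j, E' j = E (tperm pk k j).
    move=> j; rewrite /E' /= hd tpermE'.
    by case: ifP => _ //; case: ifP.
  have tpk : invc E' pk = sw (E k) by rewrite /invc hE' tpermL.
  have tk : invc E' k = sw (E pk) by rewrite /invc hE' tpermR.
  have tj : forall j, j != pk -> j != k -> invc E' j = invc E j.
    by move=> j h1 h2'; rewrite /invc hE' tpermD // eq_sym.
  have hout : forall z, z \in E pk -> z \in E k -> False.
    by move=> z z1 z2; move: (disjointFr (elimT idP hd) z1); rewrite z2.
  have nac : a != c by apply/eqP => e; apply: (hout a); rewrite ?ex ?ey !inE e eqxx.
  have nad : a != d by apply/eqP => e; apply: (hout a); rewrite ?ex ?ey !inE e eqxx ?orbT.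
  have nbc : b != c by apply/eqP => e; apply: (hout b); rewrite ?ex ?ey !inE e eqxx ?orbT.
  have nbd : b != d by apply/eqP => e; apply: (hout b); rewrite ?ex ?ey !inE e eqxx ?orbT.
  split; first exact: (relabel (tpermK pk k) (tpermK pk k) hE' hT).
  split => i v.
  + case: (eqVneq i pk) => [->|nipk].
      by rewrite /gen_img eqxx read_gl tk.
    case: (eqVneq i k) => [->|nik].
      rewrite /gen_img (negbTE nk') eqxx !read_cat read_glinv !read_gl tk tpk /invc sx sy tpermV.
      by rewrite tp_comm.
    by rewrite /gen_img (negbTE nipk) (negbTE nik) read_gl tj.
  + case: (eqVneq i k) => [->|nik].
      by rewrite /gen_img eqxx read_gl tk.
    case: (eqVneq i pk) => [->|nipk].
      rewrite /gen_img (negbTE nk) eqxx !read_cat read_glinv !read_gl tpk /invc sx sy tpermV.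
      by rewrite tp_comm.
    by rewrite /gen_img (negbTE nipk) (negbTE nik) read_gl tj.
- have nXY : E pk != E k.
    apply/eqP => eXY; have := hb pk a b; rewrite ex !inE !eqxx orbT => /(_ isT isT nab).
    move/negP; apply; apply: (@conn_edge _ _ _ _ k).
    - exact: nk'.
    - by rewrite -eXY ex !inE eqxx.
    - by rewrite -eXY ex !inE eqxx orbT.
  have [A [Bv [C [nAB nAC nBC eX eY]]]] := nondisj (h2 pk) (h2 k) (negbT hd) nXY.
  have e'pk : E' pk = [set Bv; C] by rewrite /E' /= hd eqxx eX eY symdiff_form.
  have e'k : E' k = [set A; Bv] by rewrite /E' /= hd (negbTE nk') eqxx.
  have e'j : forall j, j != pk -> j != k -> E' j = E j.
    by move=> j h1 h2'; rewrite /E' /= hd (negbTE h1) (negbTE h2').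
  have sX : sw (E pk) = tperm A Bv by rewrite eX sw2.
  have sY : sw (E k) = tperm A C by rewrite eY sw2.
  have tpk : invc E' pk = tperm Bv C by rewrite /invc e'pk sw2.
  have tk : invc E' k = tperm A Bv by rewrite /invc e'k sw2.
  have tj : forall j, j != pk -> j != k -> invc E' j = invc E j.
    by move=> j h1 h2'; rewrite /invc e'j.
  have bX : ~~ conn (without predT pk) E A Bv by apply: hb; rewrite ?eX ?eY ?inE ?eqxx ?orbT.
  have bY : ~~ conn (without predT k) E A C by apply: hb; rewrite ?eX ?eY ?inE ?eqxx ?orbT.
  have mem2 : forall (x y z : V), z \in [set x; y] -> z = x \/ z = y.
    by move=> x y z; rewrite !inE => /orP[]/eqP; auto.
  split; [split|split].
  + move=> j; case: (eqVneq j pk) => [->|h1]; first by rewrite e'pk; exists Bv, C; split => //; apply/eqP.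
    case: (eqVneq j k) => [->|h2']; first by rewrite e'k; exists A, Bv; split => //; apply/eqP.
    by rewrite e'j.
  + move=> v; apply: conn_mono (hc v) => j x y _.
    have hAC : forall z, z \in [set A; C] -> conn predT E' A z.
      move=> z /mem2 [->|->]; first exact: conn_refl.
      apply: (@conn_trans _ _ _ _ _ Bv); [apply: (@conn_edge _ _ _ _ k)|apply: (@conn_edge _ _ _ _ pk)];
        by rewrite ?e'k ?e'pk !inE ?eqxx ?orbT.
    case: (eqVneq j pk) => [->|h1].
      by rewrite eX => hx hy; apply: (@conn_edge _ _ _ _ k); rewrite // e'k.
    case: (eqVneq j k) => [->|h2'].
      rewrite eY => hx hy; apply: conn_trans (hAC _ hy); rewrite conn_sym; exact: hAC.
    by rewrite -e'j // => hx hy; apply: (@conn_edge _ _ _ _ j).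
  + move=> k0 x y.
    case: (eqVneq k0 pk) => [->|h1].
      rewrite e'pk => hx hy nxy; apply: (bridge_pair _ hx hy nxy); apply/negP => h.
      have hk : without predT pk k by exact: nk'.
      have hm : forall z, z \in E' k -> z = A \/ z = Bv by move=> z; rewrite e'k; apply: mem2.
      have hQ : forall j, without (without predT pk) k j -> E' j = E j.
        by move=> j /andP[/andP[_ j1] j2]; rewrite e'j.
      have hQ' : forall j, without (without predT pk) k j -> without predT pk j.
        by move=> j /andP[].
      have hQ'' : forall j, without (without predT pk) k j -> without predT k j.
        by move=> j /andP[/andP[_ j1] j2]; rewrite /without /= j2.
      have cAC : conn (without predT pk) E A C.
        by apply: (@conn_edge _ _ _ _ k); rewrite ?eY ?inE ?eqxx ?orbT //; exact: nk'.
      case: (conn_last hk hm h) => /(conn_eqE hQ) hq.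
      * move/negP: bX; apply; apply: conn_trans cAC _; rewrite conn_sym.
        exact: conn_monoP hQ' hq.
      * by move/negP: bY; apply; apply: conn_monoP hQ'' hq.
      * move/negP: bX; apply; apply: conn_trans cAC _; rewrite conn_sym.
        exact: conn_monoP hQ' hq.
    case: (eqVneq k0 k) => [->|h2'].
      rewrite e'k => hx hy nxy; apply: (bridge_pair _ hx hy nxy); apply/negP => h.
      have hpk : without predT k pk by exact: nk.
      have hm : forall z, z \in E' pk -> z = Bv \/ z = C by move=> z; rewrite e'pk; apply: mem2.
      have hQ : forall j, without (without predT k) pk j -> E' j = E j.
        by move=> j /andP[/andP[_ j1] j2]; rewrite e'j.
      have hQ' : forall j, without (without predT k) pk j -> without predT pk j.
        by move=> j /andP[/andP[_ j1] j2]; rewrite /without /= j2.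
      have hQ'' : forall j, without (without predT k) pk j -> without predT k j.
        by move=> j /andP[].
      case: (conn_first hpk hm h) => /(conn_eqE hQ) hq.
      * by move/negP: bX; apply; apply: conn_monoP hQ' hq.
      * by move/negP: bX; apply; apply: conn_monoP hQ' hq.
      * by move/negP: bY; apply; apply: conn_monoP hQ'' hq.
    rewrite e'j // => hx hy nxy; apply/negP => h.
    have := hb k0 x y hx hy nxy; move/negP; apply.
    have wpk : without predT k0 pk by rewrite /without /= eq_sym; exact: h1.
    have wk : without predT k0 k by rewrite /without /= eq_sym; exact: h2'.
    have cAB : conn (without predT k0) E A Bv.
      by apply: (@conn_edge _ _ _ _ pk); rewrite // eX !inE eqxx ?orbT.
    have cAC : conn (without predT k0) E A C.
      by apply: (@conn_edge _ _ _ _ k); rewrite // eY !inE eqxx ?orbT.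
    have hub : forall z, z \in [set Bv; C] -> conn (without predT k0) E A z.
      by move=> z /mem2 [->|->].
    apply: conn_mono h => j x' y' /andP[_ njk0].
    case: (eqVneq j pk) => [->|j1].
      rewrite e'pk => hx' hy'; apply: conn_trans (hub _ hy'); rewrite conn_sym; exact: hub.
    case: (eqVneq j k) => [->|j2].
      by rewrite e'k -eX => hx' hy'; apply: (@conn_edge _ _ _ _ pk).
    by rewrite e'j // => hx' hy'; apply: (@conn_edge _ _ _ _ j); rewrite // /without /= njk0.
  + move=> i v.
    case: (eqVneq i pk) => [->|nipk].
      by rewrite /gen_img eqxx read_gl tk /invc sX.
    case: (eqVneq i k) => [->|nik].
      rewrite /gen_img (negbTE nk') eqxx !read_cat read_glinv !read_gl tk tpk /invc sY tpermV.
      by rewrite tp_conj.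
    by rewrite /gen_img (negbTE nipk) (negbTE nik) read_gl tj.
  + move=> i v.
    case: (eqVneq i k) => [->|nik].
      by rewrite /gen_img eqxx read_gl tk /invc sX.
    case: (eqVneq i pk) => [->|nipk].
      rewrite /gen_img (negbTE nk) eqxx !read_cat read_glinv !read_gl tpk /invc sX sY tpermV.
      by rewrite tp_I2.
    by rewrite /gen_img (negbTE nipk) (negbTE nik) read_gl tj.
Qed.
Lemma step_BUInv (E : 'I_N -> {set V}) (k : 'I_N) : treeE E B ->
  let E' := gen_tree_act (BUInv k) E in
  treeE E' B /\ (forall i v, read (invc E') v (gen_img (BUInv k) i) = invc E i v) /\
  (forall i v, read (invc E) v (gen_img (BU k) i) = invc E' i v).
Proof.
move=> hT E'; have [h2 hc hb] := hT.
have nk : ord_pred k != k := pred_neq hN k.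
have nk' : k != ord_pred k by rewrite eq_sym.
set pk := ord_pred k in nk nk' E' *.
have [a [b [nab ex sx]]] := two_tperm (h2 pk).
have [c [d [ncd ey sy]]] := two_tperm (h2 k).
case hd: [disjoint E pk & E k].
- have hE' : forall j, E' j = E (tperm pk k j).
    move=> j; rewrite /E' /= hd tpermE'.
    by case: ifP => _ //; case: ifP.
  have tpk : invc E' pk = sw (E k) by rewrite /invc hE' tpermL.
  have tk : invc E' k = sw (E pk) by rewrite /invc hE' tpermR.
  have tj : forall j, j != pk -> j != k -> invc E' j = invc E j.
    by move=> j h1 h2'; rewrite /invc hE' tpermD // eq_sym.
  have hout : forall z, z \in E pk -> z \in E k -> False.
    by move=> z z1 z2; move: (disjointFr (elimT idP hd) z1); rewrite z2.
  have nac : a != c by apply/eqP => e; apply: (hout a); rewrite ?ex ?ey !inE e eqxx.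
  have nad : a != d by apply/eqP => e; apply: (hout a); rewrite ?ex ?ey !inE e eqxx ?orbT.
  have nbc : b != c by apply/eqP => e; apply: (hout b); rewrite ?ex ?ey !inE e eqxx ?orbT.
  have nbd : b != d by apply/eqP => e; apply: (hout b); rewrite ?ex ?ey !inE e eqxx ?orbT.
  split; first exact: (relabel (tpermK pk k) (tpermK pk k) hE' hT).
  split => i v.
  + case: (eqVneq i k) => [->|nik].
      by rewrite /gen_img eqxx read_gl tpk.
    case: (eqVneq i pk) => [->|nipk].
      rewrite /gen_img (negbTE nk) eqxx !read_cat read_glinv !read_gl tk tpk /invc sx sy tpermV.
      by rewrite tp_comm // eq_sym.
    by rewrite /gen_img (negbTE nipk) (negbTE nik) read_gl tj.
  + case: (eqVneq i pk) => [->|nipk].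
      by rewrite /gen_img eqxx read_gl tpk.
    case: (eqVneq i k) => [->|nik].
      rewrite /gen_img (negbTE nk') eqxx !read_cat read_glinv !read_gl tk /invc sx sy tpermV.
      by rewrite tp_comm // eq_sym.
    by rewrite /gen_img (negbTE nipk) (negbTE nik) read_gl tj.
- have nXY : E pk != E k.
    apply/eqP => eXY; have := hb pk a b; rewrite ex !inE !eqxx orbT => /(_ isT isT nab).
    move/negP; apply; apply: (@conn_edge _ _ _ _ k).
    - exact: nk'.
    - by rewrite -eXY ex !inE eqxx.
    - by rewrite -eXY ex !inE eqxx orbT.
  have [A [Bv [C [nAB nAC nBC eX eY]]]] := nondisj (h2 pk) (h2 k) (negbT hd) nXY.
  have e'pk : E' pk = [set A; C] by rewrite /E' /= hd eqxx eY.
  have e'k : E' k = [set Bv; C] by rewrite /E' /= hd (negbTE nk') eqxx eX eY symdiff_form.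
  have e'j : forall j, j != pk -> j != k -> E' j = E j.
    by move=> j h1 h2'; rewrite /E' /= hd (negbTE h1) (negbTE h2').
  have sX : sw (E pk) = tperm A Bv by rewrite eX sw2.
  have sY : sw (E k) = tperm A C by rewrite eY sw2.
  have tpk : invc E' pk = tperm A C by rewrite /invc e'pk sw2.
  have tk : invc E' k = tperm Bv C by rewrite /invc e'k sw2.
  have tj : forall j, j != pk -> j != k -> invc E' j = invc E j.
    by move=> j h1 h2'; rewrite /invc e'j.
  have bX : ~~ conn (without predT pk) E A Bv by apply: hb; rewrite ?eX ?eY ?inE ?eqxx ?orbT.
  have bY : ~~ conn (without predT k) E A C by apply: hb; rewrite ?eX ?eY ?inE ?eqxx ?orbT.
  have mem2 : forall (x y z : V), z \in [set x; y] -> z = x \/ z = y.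
    by move=> x y z; rewrite !inE => /orP[]/eqP; auto.
  split; [split|split].
  + move=> j; case: (eqVneq j pk) => [->|h1]; first by rewrite e'pk; exists A, C; split => //; apply/eqP.
    case: (eqVneq j k) => [->|h2']; first by rewrite e'k; exists Bv, C; split => //; apply/eqP.
    by rewrite e'j.
  + move=> v; apply: conn_mono (hc v) => j x y _.
    have hC : forall z, z \in [set A; Bv] -> conn predT E' C z.
      move=> z /mem2 [->|->].
        by apply: (@conn_edge _ _ _ _ pk); rewrite // e'pk !inE eqxx ?orbT.
      by apply: (@conn_edge _ _ _ _ k); rewrite // e'k !inE eqxx ?orbT.
    case: (eqVneq j pk) => [->|h1].
      rewrite eX => hx hy; apply: conn_trans (hC _ hy); rewrite conn_sym; exact: hC.
    case: (eqVneq j k) => [->|h2'].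
      by rewrite eY => hx hy; apply: (@conn_edge _ _ _ _ pk); rewrite // e'pk.
    by rewrite -e'j // => hx hy; apply: (@conn_edge _ _ _ _ j).
  + move=> k0 x y.
    case: (eqVneq k0 pk) => [->|h1].
      rewrite e'pk => hx hy nxy; apply: (bridge_pair _ hx hy nxy); apply/negP => h.
      have hk : without predT pk k by exact: nk'.
      have hm : forall z, z \in E' k -> z = Bv \/ z = C by move=> z; rewrite e'k; apply: mem2.
      have hQ : forall j, without (without predT pk) k j -> E' j = E j.
        by move=> j /andP[/andP[_ j1] j2]; rewrite e'j.
      have hQ' : forall j, without (without predT pk) k j -> without predT pk j.
        by move=> j /andP[].
      have hQ'' : forall j, without (without predT pk) k j -> without predT k j.
        by move=> j /andP[/andP[_ j1] j2]; rewrite /without /= j2.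
      case: (conn_first hk hm h) => /(conn_eqE hQ) hq.
      * by move/negP: bY; apply; apply: conn_monoP hQ'' hq.
      * by move/negP: bX; apply; apply: conn_monoP hQ' hq.
      * by move/negP: bY; apply; apply: conn_monoP hQ'' hq.
    case: (eqVneq k0 k) => [->|h2'].
      rewrite e'k => hx hy nxy; apply: (bridge_pair _ hx hy nxy); apply/negP => h.
      have hpk : without predT k pk by exact: nk.
      have hm : forall z, z \in E' pk -> z = A \/ z = C by move=> z; rewrite e'pk; apply: mem2.
      have hQ : forall j, without (without predT k) pk j -> E' j = E j.
        by move=> j /andP[/andP[_ j1] j2]; rewrite e'j.
      have hQ' : forall j, without (without predT k) pk j -> without predT pk j.
        by move=> j /andP[/andP[_ j1] j2]; rewrite /without /= j2.
      have cCA : conn (without predT pk) E C A.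
        by apply: (@conn_edge _ _ _ _ k); rewrite ?eY ?inE ?eqxx ?orbT //; exact: nk'.
      case: (conn_first hpk hm h) => /(conn_eqE hQ) hq.
      * move/negP: bX; apply; rewrite conn_sym; apply: conn_trans _ cCA.
        exact: conn_monoP hQ' hq.
      * by move/negP: bX; apply; rewrite conn_sym; apply: conn_monoP hQ' hq.
      * move/negP: bX; apply; rewrite conn_sym; apply: conn_trans _ cCA.
        exact: conn_monoP hQ' hq.
    rewrite e'j // => hx hy nxy; apply/negP => h.
    have := hb k0 x y hx hy nxy; move/negP; apply.
    have wpk : without predT k0 pk by rewrite /without /= eq_sym; exact: h1.
    have wk : without predT k0 k by rewrite /without /= eq_sym; exact: h2'.
    have cAB : conn (without predT k0) E A Bv.
      by apply: (@conn_edge _ _ _ _ pk); rewrite // eX !inE eqxx ?orbT.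
    have cAC : conn (without predT k0) E A C.
      by apply: (@conn_edge _ _ _ _ k); rewrite // eY !inE eqxx ?orbT.
    have hub : forall z, z \in [set Bv; C] -> conn (without predT k0) E A z.
      by move=> z /mem2 [->|->].
    apply: conn_mono h => j x' y' /andP[_ njk0].
    case: (eqVneq j k) => [->|j2].
      rewrite e'k => hx' hy'; apply: conn_trans (hub _ hy'); rewrite conn_sym; exact: hub.
    case: (eqVneq j pk) => [->|j1].
      by rewrite e'pk -eY => hx' hy'; apply: (@conn_edge _ _ _ _ k).
    by rewrite e'j // => hx' hy'; apply: (@conn_edge _ _ _ _ j); rewrite // /without /= njk0.
  + move=> i v.
    case: (eqVneq i k) => [->|nik].
      by rewrite /gen_img eqxx read_gl tpk /invc sY.
    case: (eqVneq i pk) => [->|nipk].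
      rewrite /gen_img (negbTE nk) eqxx !read_cat read_glinv !read_gl tk tpk /invc sX tpermV.
      by rewrite tp_I3.
    by rewrite /gen_img (negbTE nipk) (negbTE nik) read_gl tj.
  + move=> i v.
    case: (eqVneq i pk) => [->|nipk].
      by rewrite /gen_img eqxx read_gl tpk /invc sY.
    case: (eqVneq i k) => [->|nik].
      rewrite /gen_img (negbTE nk') eqxx !read_cat read_glinv !read_gl tk /invc sX sY tpermV.
      by rewrite tp_I4.
    by rewrite /gen_img (negbTE nipk) (negbTE nik) read_gl tj.
Qed.
End StepU.

Section Main.
Variables (N : nat) (V : finType) (B : V).
Hypothesis hN : 2 <= N.

Lemma step_gen (g : bcgen N) (E : 'I_N -> {set V}) : treeE E B ->
  let E' := gen_tree_act g E in
  treeE E' B /\ (forall i v, read (invc E') v (gen_img g i) = invc E i v) /\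
  (forall i v, read (invc E) v (gen_img (ginv g) i) = invc E' i v).
Proof.
move=> hT; case: g => [||k|k] E'.
- split; first exact: (relabel (@ord_predK N) (@ordSK N) (fun j => erefl) hT).
  by split => i v //=; rewrite /step_letter /invc /E' /= ordSK.
- split; first exact: (relabel (@ordSK N) (@ord_predK N) (fun j => erefl) hT).
  by split => i v //=; rewrite /step_letter /invc /E' /= ord_predK.
- exact: step_BU.
- exact: step_BUInv.
Qed.

Lemma step_sub (g : bcgen N) (E : 'I_N -> {set V}) : treeE E B ->
  forall w, in_g (invc (gen_tree_act g E)) B w <->
    exists h, in_g (invc E) B h /\ free_eq (subst (gen_img g) h) w.
Proof.
move=> hT; have [_ [h2a h2b]] := step_gen g hT => w; split.
- move=> hw; exists (subst (gen_img (ginv g)) w); split.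
    by rewrite /in_g (read_subst h2b).
  rewrite subst_comp; apply: feq_trans (subst_feq_fun w (S3 hN g)) _.
  by rewrite subst_gl; apply: feq_refl.
- case=> h [hh hf]; rewrite /in_g -(read_feq _ _ hf) (read_subst h2a); exact: hh.
Qed.

Variables (sigma : 'I_N -> {perm V}).
Hypothesis htl : tree_like sigma.
Hypothesis hconn : connected_cov sigma B.

Lemma main_ind (s : seq (bcgen N)) :
  treeE (tree_act s (gamma sigma)) B /\
  forall w, in_g (invc (tree_act s (gamma sigma))) B w <->
    exists h, in_g sigma B h /\ free_eq (bc_apply s h) w.
Proof.
elim: s => [|g s [hT IH]] /=.
- split; first exact: T1_tree.
  have e : forall v w, read (invc (gamma sigma)) v w = read sigma v w.
    by move=> v w; apply: read_ext => k; rewrite /invc -T1_sw.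
  move=> w; rewrite /in_g e; split.
    by move=> h; exists w; split => //; apply: feq_refl.
  by case=> h [hh hf]; rewrite -(read_feq _ _ hf).
- split; first by case: (step_gen g hT).
  move=> w; rewrite (step_sub g hT w); split.
    case=> h' [/IH [h [hh hf]] hf']; exists h; split => //.
    exact: feq_trans (subst_feq _ hf) hf'.
  case=> h [hh hf]; exists (bc_apply s h); split => //.
  by apply/IH; exists h; split => //; apply: feq_refl.
Qed.
End Main.

Unset Implicit Arguments. Set Strict Implicit. Set Printing Implicit Defensive.

Theorem theorem8 (N : nat) (hN : 2 <= N)
  (V : finType) (sigma : 'I_N -> {perm V}) (B : V)
  (hconn : connected_cov sigma B) (htl : tree_like sigma)
  (s : seq (bcgen N)) (hs : bc_word_ok s)
  (V' : finType) (sigma' : 'I_N -> {perm V'}) (B' : V')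
  (hconn' : connected_cov sigma' B')
  (hg : forall w : fword N,
        in_g sigma' B' w <-> exists h, in_g sigma B h /\ free_eq (bc_apply s h) w) :
  tree_like sigma' /\
  exists f : V -> V', bijective f /\ f B = B' /\
    forall k : 'I_N, gamma sigma' k = f @: tree_act s (gamma sigma) k.
Proof.
have [hT hI] := main_ind hN htl hconn s.
set E := tree_act s (gamma sigma) in hT hI *.
have tc := T2_conn hT.
have heq : forall w, in_g (invc E) B w <-> in_g sigma' B' w.
  by move=> w; rewrite hI hg.
have [f hf] := iso_map tc (fun w => proj1 (heq w)).
have [g hg'] := iso_map hconn' (fun w => proj2 (heq w)).
have fK : cancel f g by move=> v; case: (tc v) => w <-; rewrite hf hg'.
have gK : cancel g f by move=> v; case: (hconn' v) => w <-; rewrite hg' hf.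
have hcomm : forall k v, f (invc E k v) = sigma' k (f v).
  move=> k v; case: (tc v) => w <-.
  have e1 : invc E k (read (invc E) B w) = read (invc E) B (w ++ [:: (k, false)]) by rewrite read_cat.
  have e2 : sigma' k (read sigma' B' w) = read sigma' B' (w ++ [:: (k, false)]) by rewrite read_cat.
  by rewrite e1 !hf e2.
split; first exact: (tl_transport fK gK hcomm (T2_tl hT)).
exists f; split; first exact: (Bijective fK gK).
split; first by have := hf [::].
by move=> k; rewrite (gamma_transport fK gK hcomm) (T2_gamma hT).
Qed.
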